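(* In the setting described in the context, assume $\sum_{j\in J}a_{ij}\hat{x}_j\ge b_i$ for all $i\in I$. For each $i\in I$ let $t_i$ be the optimal value and $(\Gamma^{(i)},\varphi^{(i)})$ an optimal solution of \[ \min_{\Gamma,\varphi}\ \sum_{j\in J}a_{ij}\hat{x}_j-\sum_{j\in J_i}\alpha_{ij}|\hat{x}_j|\varphi_{ij}-b_i \] subject to $\sum_{j\in J_i}\varphi_{ij}\le\Gamma_i$; $0\le\varphi_{ij}\le1$ for all $j\in J_i$; $\Gamma\in\Theta\cap\Omega$. Let $i^*\in\arg\min_{i\in I}t_i$ and $\Gamma^*=\Gamma^{(i^* )}$. Then the optimal value of RLO-CCU-DG is $t_{i^*}$, and an optimal solution has $\Gamma=\Gamma^*$, $c=\bar{a}_{i^*}(\Gamma^*_{i^*},\hat{x})$, $\pi=e_{i^*}$. Moreover, if for every $i\in I$ either $|a_{ij}|>\alpha_{ij}$ for some $j\in J_i$ or $a_{ij}\neq0$ for some $j\in J\setminus J_i$, then $c\neq0$ and $\bar{a}_i(\Gamma_i,x)\neq0$ for all $i\in I$ and all $x\in\mathbb{R}^n$.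
   Context: Let $I=\{1,\dots,m\}$, $J=\{1,\dots,n\}$. Given are $a_{ij}\in\mathbb{R}$, $b\in\mathbb{R}^m$, index sets $J_i\subseteq J$, nonnegative numbers $\alpha_{ij}$ ($j\in J_i,i\in I$), an observed point $\hat{x}\in\mathbb{R}^n$, and a convex set $\Omega\subseteq\mathbb{R}^m$. Let $\mathrm{sgn}(t)=1$ if $t\ge0$ and $-1$ otherwise; $e_i$ is the $i$-th unit vector of $\mathbb{R}^m$. For $i\in I$ and $x\in\mathbb{R}^n$ let $j^i_1(x),\dots,j^i_{|J_i|}(x)$ order $J_i$ so that $\alpha_{ij^i_k(x)}|x_{j^i_k(x)}|$ is the $k$-th largest element of $\{\alpha_{ij}|x_j|\}_{j\in J_i}$. For $\Gamma_i\in[0,|J_i|]$ let $P_i(\Gamma_i,x)=\sum_{k=1}^{\lfloor\Gamma_i\rfloor}\alpha_{ij^i_k(x)}|x_{j^i_k(x)}|+(\Gamma_i-\lfloor\Gamma_i\rfloor)\alpha_{ij^i_{\lceil\Gamma_i\rceil}(x)}|x_{j^i_{\lceil\Gamma_i\rceil}(x)}|$ (last term $0$ for integer $\Gamma_i$), and define $\bar{a}_i(\Gamma_i,x)\in\mathbb{R}^n$ by $\bar{a}_{ij}(\Gamma_i,x)=a_{ij}-\mathrm{sgn}(x_j)\alpha_{ij}$ if $j=j^i_k(x)$ for some $k\in\{1,\dots,\lfloor\Gamma_i\rfloor\}$; $\bar{a}_{ij}(\Gamma_i,x)=a_{ij}-\mathrm{sgn}(x_j)\alpha_{ij}(\Gamma_i-\lfloor\Gamma_i\rfloor)$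 if $j=j^i_{\lfloor\Gamma_i\rfloor+1}(x)$; and $\bar{a}_{ij}(\Gamma_i,x)=a_{ij}$ otherwise. Let $s_i=\sum_{j\in J}a_{ij}\hat{x}_j-b_i$, $\hat{I}=\{i\in I:0\le s_i\le\sum_{j\in J_i}\alpha_{ij}|\hat{x}_j|\}$, and for $i\in\hat{I}$ let $\underline{\Gamma}_i=\min\{\sum_{j\in J_i}w_j:\sum_{j\in J_i}\alpha_{ij}|\hat{x}_j|w_j=s_i,\ 0\le w_j\le1\}$, so $s_i=P_i(\underline{\Gamma}_i,\hat{x})$. Standing assumption: for each $i\in\hat{I}$, $\underline{\Gamma}_i$ is the unique $\Gamma_i\in[0,|J_i|]$ with $s_i=P_i(\Gamma_i,\hat{x})$. Let $\Theta=\{\Gamma\in\mathbb{R}^m:\Gamma_i\in[0,\underline{\Gamma}_i]\ \forall i\in\hat{I};\ \Gamma_i\in[0,|J_i|]\ \forall i\in I\setminus\hat{I}\}$. The problem RLO-CCU-DG is \[ \min_{\Gamma,c,u,y,z,\pi,\varphi,\lambda,\mu}\ \sum_{j\in J}c_j\hat{x}_j-\sum_{i\in I}b_i\pi_i \] subject to: $\Gamma\in\Omega$; $\alpha_{ij}\hat{x}_j+u_{ij}\ge0$ and $-\alpha_{ij}\hat{x}_j+u_{ij}\ge0$ ($j\in J_i,i\in I$); $y_{ij}+z_i\ge u_{ij}$ ($j\in J_i,i\in I$); $\sum_{j\in J}a_{ij}\hat{x}_j-\sum_{j\in J_i}y_{ij}-\Gamma_iz_i\ge b_i$ ($i\in I$);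 $y_{ij},z_i\ge0$; $0\le\Gamma_i\le|J_i|$ ($i\in I$); $\sum_{i\in I}\pi_i=1$; $\sum_{i\in I}a_{ij}\pi_i+\sum_{i\in I:j\in J_i}\alpha_{ij}(\lambda_{ij}-\mu_{ij})=c_j$ ($j\in J$); $\varphi_{ij}\le\pi_i$ and $\varphi_{ij}=\lambda_{ij}+\mu_{ij}$ ($j\in J_i,i\in I$); $\sum_{j\in J_i}\varphi_{ij}\le\Gamma_i\pi_i$ ($i\in I$); $\pi_i,\varphi_{ij},\lambda_{ij},\mu_{ij}\ge0$ ($j\in J_i,i\in I$). *)

(* Defs.v *)
From mathcomp Require Import all_boot all_order all_algebra.
Set Implicit Arguments. Unset Strict Implicit. Unset Printing Implicit Defensive.
Import Order.TTheory GRing.Theory Num.Theory.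
Local Open Scope ring_scope.

Section RLO.
Variables (R : archiRealFieldType) (m n : nat).
Variables (a : 'I_m -> 'I_n -> R) (b : 'I_m -> R) (J : 'I_m -> {set 'I_n})
          (alpha : 'I_m -> 'I_n -> R) (xhat : 'I_n -> R).

Definition sgn (t : R) : R := if 0 <= t then 1 else -1.

Definition cardJ (i : 'I_m) : R := (#|J i|)%:R.

(* the ordering j^i_1(x), ..., j^i_{|J_i|}(x) of J_i by decreasing
   alpha_ij |x_j|; ties broken by increasing index (stable sort of enum J_i).
   j^i_k(x) = nth _ (ordJ i x) k.-1 *)
Definition ordJ (i : 'I_m) (x : 'I_n -> R) : seq 'I_n :=
  sort (fun j k => alpha i k * `|x k| <= alpha i j * `|x j|) (enum (J i)).

Definition ordvals (i : 'I_m) (x : 'I_n -> R) : seq R :=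
  [seq alpha i j * `|x j| | j <- ordJ i x].

Definition flo (G : R) : nat := Num.truncn G.
Definition cei (G : R) : nat := if (flo G)%:R == G then flo G else (flo G).+1.

Definition P (i : 'I_m) (G : R) (x : 'I_n -> R) : R :=
  \sum_(0 <= k < flo G) nth 0 (ordvals i x) k
  + (if cei G == flo G then 0
     else (G - (flo G)%:R) * nth 0 (ordvals i x) (cei G).-1).

(* abar_i(Gamma_i, x) : position of j in the ordering is index j (ordJ i x)
   (0-based), so j = j^i_k(x) with k = index + 1 *)
Definition abar (i : 'I_m) (G : R) (x : 'I_n -> R) (j : 'I_n) : R :=
  if (j \in J i) && (index j (ordJ i x) < flo G)%N then
    a i j - sgn (x j) * alpha i j
  else if (j \in J i) && (index j (ordJ i x) == flo G) then
    a i j - sgn (x j) * alpha i j * (G - (flo G)%:R)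
  else a i j.

Definition s (i : 'I_m) : R := \sum_j a i j * xhat j - b i.

Definition Ihat (i : 'I_m) : Prop :=
  0 <= s i /\ s i <= \sum_(j in J i) alpha i j * `|xhat j|.

(* feasible set of the LP defining underline Gamma_i *)
Definition lowLP_feas (i : 'I_m) (w : 'I_n -> R) : Prop :=
  \sum_(j in J i) alpha i j * `|xhat j| * w j = s i /\
  (forall j, j \in J i -> 0 <= w j <= 1).

Definition is_Glow (i : 'I_m) (g : R) : Prop :=
  (exists w, lowLP_feas i w /\ \sum_(j in J i) w j = g) /\
  (forall w, lowLP_feas i w -> g <= \sum_(j in J i) w j).

Definition Theta (Glow : 'I_m -> R) (G : 'I_m -> R) : Prop :=
  forall i, (Ihat i -> 0 <= G i <= Glow i) /\
            (~ Ihat i -> 0 <= G i <= cardJ i).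

Definition convex_set (Omega : ('I_m -> R) -> Prop) : Prop :=
  forall (x y : 'I_m -> R) (t : R), 0 <= t <= 1 -> Omega x -> Omega y ->
    Omega (fun i => t * x i + (1 - t) * y i).

Definition sub_feas (Omega : ('I_m -> R) -> Prop) (Glow : 'I_m -> R)
  (i : 'I_m) (G : 'I_m -> R) (phi : 'I_n -> R) : Prop :=
  \sum_(j in J i) phi j <= G i /\
  (forall j, j \in J i -> 0 <= phi j <= 1) /\
  Theta Glow G /\ Omega G.

Definition sub_obj (i : 'I_m) (phi : 'I_n -> R) : R :=
  \sum_j a i j * xhat j - \sum_(j in J i) alpha i j * `|xhat j| * phi j - b i.

Definition dg_feas (Omega : ('I_m -> R) -> Prop)
  (G : 'I_m -> R) (c : 'I_n -> R) (u y : 'I_m -> 'I_n -> R) (z : 'I_m -> R)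
  (pi : 'I_m -> R) (phi lam mu : 'I_m -> 'I_n -> R) : Prop :=
  Omega G /\
  (forall i j, j \in J i ->
     [/\ alpha i j * xhat j + u i j >= 0, - (alpha i j * xhat j) + u i j >= 0,
         y i j + z i >= u i j, y i j >= 0 &
         [/\ phi i j <= pi i, phi i j = lam i j + mu i j,
             phi i j >= 0, lam i j >= 0 & mu i j >= 0]]) /\
  (forall i,
     [/\ \sum_j a i j * xhat j - \sum_(j in J i) y i j - G i * z i >= b i,
         z i >= 0, 0 <= G i <= cardJ i, pi i >= 0 &
         \sum_(j in J i) phi i j <= G i * pi i]) /\
  \sum_i pi i = 1 /\
  (forall j, \sum_i a i j * pi i
             + \sum_(i | j \in J i) alpha i j * (lam i j - mu i j) = c j).

Definition dg_obj (c : 'I_n -> R) (pi : 'I_m -> R) : R :=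
  \sum_j c j * xhat j - \sum_i b i * pi i.

Definition unitv (i : 'I_m) : 'I_m -> R := fun k => if k == i then 1 else 0.

End RLO.

(* Main.v *)
Require Import Defs.
From mathcomp Require Import all_boot all_order all_algebra.
From mathcomp Require Import lra ring.
Import Order.TTheory GRing.Theory Num.Theory.
Local Open Scope ring_scope.

Section Aux.
Variables (R : archiRealFieldType) (m n : nat) (J : 'I_m -> {set 'I_n})
  (alpha : 'I_m -> 'I_n -> R).
Hypothesis ha : forall i j, j \in J i -> 0 <= alpha i j.
Variables (i : 'I_m) (x : 'I_n -> R).

Definition vv (j : 'I_n) : R := alpha i j * `|x j|.
Local Notation o := (ordJ J alpha i x).
Local Notation w := (ordvals J alpha i x).

Definition thk (fl : nat) (c : R) (k : nat) : R :=
  if (k < fl)%N then 1 else if k == fl then c else 0.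
Definition th (G : R) (j : 'I_n) : R := thk (flo G) (G - (flo G)%:R) (index j o).
Definition wst (G : R) : R := nth 0 w (flo G).

Lemma vv_ge0 j : j \in J i -> 0 <= vv j.
Proof. by move=> hj; rewrite /vv mulr_ge0 // ha. Qed.

Lemma size_o : size o = #|J i|.
Proof. by rewrite size_sort cardE. Qed.
Lemma size_w : size w = #|J i|.
Proof. by rewrite size_map size_o. Qed.
Lemma mem_o j : (j \in o) = (j \in J i).
Proof. by rewrite mem_sort mem_enum. Qed.
Lemma uniq_o : uniq o.
Proof. by rewrite sort_uniq enum_uniq. Qed.

Lemma w_ge0 y : y \in w -> 0 <= y.
Proof. by case/mapP => j; rewrite mem_o => hj ->; apply: vv_ge0. Qed.

Lemma nth_w_ge0 k : 0 <= nth 0 w k.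
Proof.
case: (ltnP k (size w)) => h; first by apply: w_ge0; rewrite mem_nth.
by rewrite nth_default.
Qed.

Lemma w_sorted : sorted (fun p q : R => q <= p) w.
Proof.
rewrite sorted_map; apply: sort_sorted => p q.
by rewrite /= le_total.
Qed.

Lemma w_mono k1 k2 : (k1 <= k2)%N -> (k1 < size w)%N -> nth 0 w k2 <= nth 0 w k1.
Proof.
move=> h12 h1; case: (ltnP k2 (size w)) => h2.
  have tr : transitive (fun p q : R => q <= p).
    by move=> p q r /= h1' h2'; apply: le_trans h2' h1'.
  exact: (sorted_leq_nth tr (fun p => lexx p) 0 w_sorted).
by rewrite (nth_default _ h2) nth_w_ge0.
Qed.

Lemma vv_nth j : j \in J i -> vv j = nth 0 w (index j o) /\ (index j o < size w)%N.
Proof.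
rewrite -mem_o => hj; split; last by rewrite size_map index_mem.
by rewrite (nth_map j) ?index_mem // nth_index.
Qed.

Lemma flo_itv (G : R) : 0 <= G -> (flo G)%:R <= G < (flo G).+1%:R.
Proof. exact: truncn_itv. Qed.

Lemma frac01 (G : R) : 0 <= G -> 0 <= G - (flo G)%:R < 1.
Proof.
move=> /flo_itv /andP[h1 h2]; rewrite -natr1 in h2.
apply/andP; split; lra.
Qed.

Lemma th01 (G : R) j : 0 <= G -> 0 <= th G j <= 1.
Proof.
move=> /frac01 /andP[h1 h2]; rewrite /th /thk.
case: ifP => _; first by rewrite ler01 lexx.
case: ifP => _; last by rewrite lexx ler01.
by rewrite h1 ltW.
Qed.

Lemma keyK (G : R) j (phi : R) : j \in J i -> 0 <= phi <= 1 ->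
  0 <= (vv j - wst G) * (th G j - phi).
Proof.
move=> hj /andP[p0 p1]; have [-> hs] := vv_nth j hj.
rewrite /th /thk /wst; case: ltngtP => h.
- apply: mulr_ge0; first by rewrite subr_ge0; apply: w_mono => //; exact: ltnW.
  by rewrite subr_ge0.
- have hle : nth 0 w (index j o) <= nth 0 w (flo G).
    by apply: w_mono; [exact: ltnW | exact: ltn_trans hs].
  apply: mulr_le0; first by rewrite subr_le0.
  by rewrite sub0r oppr_le0.
- by rewrite h subrr mul0r.
Qed.

Lemma L1 (f : nat -> R) N fl c : (forall k, (N <= k)%N -> f k = 0) ->
  \sum_(0 <= k < N) f k * thk fl c k = \sum_(0 <= k < fl) f k + c * f fl.
Proof.
move=> f0.
have A : forall M, (fl < M)%N ->
    \sum_(0 <= k < M) f k * thk fl c k = \sum_(0 <= k < fl) f k + c * f fl.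
  elim=> [//|M IH] H; rewrite big_nat_recr //=.
  move: H; rewrite ltnS leq_eqVlt => /orP[/eqP E|H].
    rewrite -E /thk ltnn eqxx mulrC; congr (_ + _).
    by apply: eq_big_nat => k /andP[_ ->]; rewrite mulr1.
  rewrite IH // /thk ltnNge (ltnW H) /= (gtn_eqF H) mulr0 addr0 //.
have HM : (fl < N + fl.+1)%N by rewrite addnS ltnS leq_addl.
rewrite -(A _ HM) [RHS](big_cat_nat (leq0n N) (leq_addr fl.+1 N)) /=.
rewrite [X in _ = _ + X]big_nat_cond [X in _ = _ + X]big1 ?addr0 // => k /andP[/andP[Nk _] _].
by rewrite f0 // mul0r.
Qed.

Lemma P_formula (G : R) : 0 <= G -> P J alpha i G x =
  \sum_(0 <= k < flo G) nth 0 w k + (G - (flo G)%:R) * nth 0 w (flo G).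
Proof.
move=> G0; rewrite /P /cei; case: (boolP ((flo G)%:R == G)) => [/eqP E|NE].
  by rewrite eqxx E subrr mul0r.
have -> : ((flo G).+1 == flo G) = false by rewrite eqn_leq ltnn.
by [].
Qed.

Lemma sum_o (j0 : 'I_n) (F : 'I_n -> R) :
  \sum_(j in J i) F j = \sum_(0 <= k < #|J i|) F (nth j0 o k).
Proof.
have pe : perm_eq o (enum (J i)) by rewrite perm_sort.
by rewrite -big_enum -(perm_big _ pe) (big_nth j0) size_o.
Qed.

Lemma P_repr_j0 (j0 : 'I_n) (G : R) : 0 <= G ->
  P J alpha i G x = \sum_(j in J i) vv j * th G j.
Proof.
move=> G0; rewrite (sum_o j0) P_formula //.
rewrite -(L1 (fun k => nth 0 w k) #|J i| (flo G) (G - (flo G)%:R)); last first.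
  by move=> k hk; rewrite nth_default // size_w.
apply: eq_big_nat => k /andP[_ hk].
rewrite /th index_uniq ?uniq_o ?size_o //.
by rewrite (nth_map j0) // size_o.
Qed.

Lemma sum_th_j0 (j0 : 'I_n) (G : R) : 0 <= G ->
  \sum_(j in J i) th G j = if (flo G < #|J i|)%N then G else (#|J i|)%:R.
Proof.
move=> G0; rewrite (sum_o j0).
rewrite (eq_big_nat _ _ (F2 := fun k => thk (flo G) (G - (flo G)%:R) k)); last first.
  by move=> k /andP[_ hk]; rewrite /th index_uniq ?uniq_o ?size_o.
case: ifP => h.
  rewrite (eq_big_nat _ _ (F2 := fun k => (if (k < #|J i|)%N then 1 else 0) *
                thk (flo G) (G - (flo G)%:R) k)); last first.
    by move=> k /andP[_ ->]; rewrite mul1r.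
  rewrite L1; last by move=> k; rewrite leqNgt => /negbTE ->.
  rewrite h mulr1 (eq_big_nat _ _ (F2 := fun _ => 1)); last first.
    by move=> k /andP[_ hk]; rewrite (ltn_trans hk h).
  by rewrite sumr_const_nat subn0 addrC subrK.
rewrite (eq_big_nat _ _ (F2 := fun _ => 1)); last first.
  move=> k /andP[_ hk]; rewrite /thk (leq_trans hk) //.
  by rewrite leqNgt h.
by rewrite sumr_const_nat subn0.
Qed.


Lemma nth_w0 : J i = set0 -> forall k, nth 0 w k = 0.
Proof. by move=> E k; rewrite nth_default // size_w E cards0. Qed.

Lemma P_repr (G : R) : 0 <= G -> P J alpha i G x = \sum_(j in J i) vv j * th G j.
Proof.
move=> G0; case: (set_0Vmem (J i)) => [E | [j0 _]]; last by have h := P_repr_j0 j0 G G0; exact h.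
rewrite P_formula // big1_seq ?nth_w0 ?mulr0 ?addr0 //; last by move=> k _; rewrite nth_w0.
by rewrite E big_set0.
Qed.

Lemma sum_th (G : R) : 0 <= G ->
  \sum_(j in J i) th G j <= G /\ wst G * (G - \sum_(j in J i) th G j) = 0.
Proof.
move=> G0; case: (set_0Vmem (J i)) => [E | [j0 _]].
  by rewrite /wst nth_w0 // mul0r E big_set0.
rewrite sum_th_j0 //; case: ifP => h; first by rewrite lexx subrr mulr0.
split.
  have /andP[hf _] := flo_itv G G0; apply: le_trans hf.
  by rewrite ler_nat leqNgt h.
by rewrite /wst nth_default ?mul0r // size_w leqNgt h.
Qed.

Lemma wst_ge0 (G : R) : 0 <= wst G.
Proof. exact: nth_w_ge0. Qed.

Lemma greedy (G : R) (phi : 'I_n -> R) : 0 <= G -> (forall j, j \in J i -> 0 <= phi j <= 1) ->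
  \sum_(j in J i) phi j <= G ->
  \sum_(j in J i) vv j * phi j <= P J alpha i G x.
Proof.
move=> G0 hphi hs; rewrite P_repr //.
have [hle hw] := sum_th G G0.
set W := wst G in hw *.
have e1 : forall j, vv j * th G j - vv j * phi j =
    (vv j - W) * (th G j - phi j) + (W * th G j - W * phi j).
  by move=> j; ring.
rewrite -subr_ge0 -sumrB (eq_bigr _ (fun j _ => e1 j)) big_split /= sumrB.
rewrite -!mulr_sumr.
have -> : W * \sum_(j in J i) th G j = W * G.
  by move/eqP: hw; rewrite mulrBr subr_eq0 => /eqP ->.
rewrite -mulrBr; apply: addr_ge0.
  by apply: sumr_ge0 => j hj; apply: keyK => //; exact: hphi.
by apply: mulr_ge0; [exact: wst_ge0 | rewrite subr_ge0].
Qed.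

Lemma dual_bound (G : R) (y : 'I_n -> R) z : 0 <= G -> 0 <= z ->
  (forall j, j \in J i -> 0 <= y j) -> (forall j, j \in J i -> vv j <= y j + z) ->
  P J alpha i G x <= \sum_(j in J i) y j + G * z.
Proof.
move=> G0 z0 hy hv; rewrite P_repr //.
have [hle _] := sum_th G G0.
apply: (@le_trans _ _ (\sum_(j in J i) (y j + z) * th G j)).
  apply: ler_sum => j hj; apply: ler_wpM2r; last exact: hv.
  by have /andP[] := th01 G j G0.
rewrite (eq_bigr (fun j => y j * th G j + z * th G j)); last by move=> j _; rewrite mulrDl.
rewrite big_split /= -mulr_sumr; apply: lerD.
  apply: ler_sum => j hj; apply: ler_piMr; first exact: hy.
  by have /andP[] := th01 G j G0.
by rewrite mulrC; apply: ler_wpM2r.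
Qed.

Lemma dual_exact (G : R) : 0 <= G ->
  (forall j, j \in J i -> 0 <= (vv j - wst G) * th G j) /\
  (forall j, j \in J i -> vv j <= (vv j - wst G) * th G j + wst G) /\
  \sum_(j in J i) (vv j - wst G) * th G j + G * wst G = P J alpha i G x.
Proof.
move=> G0; split; [|split].
- by move=> j hj; have := keyK G j 0 hj; rewrite subr0 lexx ler01; apply.
- move=> j hj; have := keyK G j 1 hj; rewrite ler01 lexx => /(_ isT).
  by rewrite mulrBr mulr1 => h; lra.
- have [_ hw] := sum_th G G0.
  rewrite P_repr // (eq_bigr (fun j => vv j * th G j - wst G * th G j)); last first.
    by move=> j _; rewrite mulrBl.
  rewrite sumrB -mulr_sumr; move: hw; rewrite mulrBr => hw; lra.
Qed.

Lemma P_mono (G1 G2 : R) : 0 <= G1 -> G1 <= G2 -> P J alpha i G1 x <= P J alpha i G2 x.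
Proof.
move=> G10 h12; rewrite [X in X <= _]P_repr //; apply: greedy.
- exact: le_trans h12.
- by move=> j _; apply: th01.
- by have [h _] := sum_th G1 G10; apply: le_trans h12.
Qed.

Lemma P_le_sum (G : R) : 0 <= G -> P J alpha i G x <= \sum_(j in J i) vv j.
Proof.
move=> G0; rewrite P_repr //; apply: ler_sum => j hj; apply: ler_piMr.
  exact: vv_ge0.
by have /andP[] := th01 G j G0.
Qed.

Lemma P0 : P J alpha i 0 x = 0.
Proof.
by rewrite P_formula // /flo truncn0 big_geq // mulr0n subrr mul0r addr0.
Qed.

Lemma abar_th (a : 'I_m -> 'I_n -> R) (G : R) j :
  abar a J alpha i G x j =
  if j \in J i then a i j - sgn (x j) * alpha i j * th G j else a i j.
Proof.
rewrite /abar /th /thk; case: (j \in J i) => //=.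
case: ifP => _; first by rewrite mulr1.
by case: ifP => _; rewrite ?mulr0 ?subr0.
Qed.

End Aux.

Arguments vv {R m n} alpha i x j.
Arguments th {R m n} J alpha i x G j.
Arguments wst {R m n} J alpha i x G.
Arguments th01 {R m n J alpha i x}.
Arguments greedy {R m n J alpha}.
Arguments dual_bound {R m n J alpha}.
Arguments dual_exact {R m n J alpha}.
Arguments P_mono {R m n J alpha}.
Arguments P_le_sum {R m n J alpha}.
Arguments P_repr {R m n J alpha}.
Arguments sum_th {R m n J alpha}.
Arguments wst_ge0 {R m n J alpha}.
Arguments P0 {R m n J alpha}.
Arguments abar_th {R m n J alpha i x}.

Lemma sgnK (R : archiRealFieldType) (x : R) : sgn x * x = `|x|.
Proof.
rewrite /sgn; case: ifP => h; first by rewrite mul1r ger0_norm.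
by rewrite mulN1r ltr0_norm // ltNge h.
Qed.

Lemma normsgn (R : archiRealFieldType) (x : R) : `|sgn x| = 1.
Proof. by rewrite /sgn; case: ifP => _; rewrite ?normrN normr1. Qed.
Theorem theorem5 (R : archiRealFieldType) (m n : nat)
  (a : 'I_m -> 'I_n -> R) (b : 'I_m -> R) (J : 'I_m -> {set 'I_n})
  (alpha : 'I_m -> 'I_n -> R) (xhat : 'I_n -> R)
  (Omega : ('I_m -> R) -> Prop) (Glow : 'I_m -> R)
  (t : 'I_m -> R) (Gs : 'I_m -> 'I_m -> R) (phis : 'I_m -> 'I_n -> R)
  (istar : 'I_m) :
  (* data assumptions *)
  (forall i j, j \in J i -> 0 <= alpha i j) ->
  convex_set Omega ->
  (* underline Gamma_i, i in \hat I *)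
  (forall i, Ihat a b J alpha xhat i -> is_Glow a b J alpha xhat i (Glow i)) ->
  (* standing assumption: uniqueness of Gamma_i with s_i = P_i(Gamma_i, xhat) *)
  (forall i, Ihat a b J alpha xhat i ->
     forall G, 0 <= G <= cardJ R J i ->
       s a b xhat i = P J alpha i G xhat -> G = Glow i) ->
  (* xhat feasible *)
  (forall i, \sum_j a i j * xhat j >= b i) ->
  (* t_i optimal value, (Gamma^(i), phi^(i)) optimal solution of subproblem i *)
  (forall i, sub_feas a b J alpha xhat Omega Glow i (Gs i) (phis i)) ->
  (forall i, t i = sub_obj a b J alpha xhat i (phis i)) ->
  (forall i G phi, sub_feas a b J alpha xhat Omega Glow i G phi ->
     t i <= sub_obj a b J alpha xhat i phi) ->
  (* i* in argmin t_i *)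
  (forall i, t istar <= t i) ->
  (* conclusions *)
  (forall G c u y z pi phi lam mu,
     dg_feas a b J alpha xhat Omega G c u y z pi phi lam mu ->
     t istar <= dg_obj b xhat c pi) /\
  (exists u y z phi lam mu,
     dg_feas a b J alpha xhat Omega (Gs istar)
       (abar a J alpha istar (Gs istar istar) xhat) u y z (unitv R istar)
       phi lam mu /\
     dg_obj b xhat (abar a J alpha istar (Gs istar istar) xhat) (unitv R istar)
       = t istar) /\
  ((forall i, (exists2 j, j \in J i & `|a i j| > alpha i j) \/
              (exists2 j, j \notin J i & a i j != 0)) ->
   abar a J alpha istar (Gs istar istar) xhat <> (fun _ => 0) /\
   (forall i G x, 0 <= G <= cardJ R J i -> abar a J alpha i G x <> (fun _ => 0))).
Proof.
move=> ha cvx hGlow huniq hxf hsub ht hopt hstar.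
have s_ge0 : forall i, 0 <= s a b xhat i by move=> i; rewrite /s subr_ge0.
have Ihat_dec : forall i, Ihat a b J alpha xhat i \/ ~ Ihat a b J alpha xhat i.
  move=> i; rewrite /Ihat; case: (boolP (s a b xhat i <= \sum_(j in J i) alpha i j * `|xhat j|)).
    by move=> h; left; split.
  by move=> h; right; case.
have Glow_facts : forall i, Ihat a b J alpha xhat i ->
   [/\ 0 <= Glow i, Glow i <= cardJ R J i & P J alpha i (Glow i) xhat = s a b xhat i].
  move=> i hI; have [[w0 [[hw1 hw2] hw3]] hmin] := hGlow i hI.
  have G0 : 0 <= Glow i.
    by rewrite -hw3 sumr_ge0 // => j hj; case/andP: (hw2 j hj).
  have Gc : Glow i <= cardJ R J i.
    rewrite -hw3 /cardJ; apply: (@le_trans _ _ (\sum_(j in J i) (1 : R))).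
      by apply: ler_sum => j hj; case/andP: (hw2 j hj).
    by rewrite sumr_const.
  split => //; apply/eqP; rewrite eq_le; apply/andP; split; last first.
    rewrite -hw1; apply: (greedy ha i xhat (Glow i) w0 G0) => //; by rewrite hw3.
  rewrite leNgt; apply/negP => hlt.
  set p := P J alpha i (Glow i) xhat in hlt.
  have p_pos : 0 < p by apply: le_lt_trans hlt; apply: s_ge0.
  set lam := s a b xhat i / p.
  have l0 : 0 <= lam by rewrite divr_ge0 // ltW.
  have l1 : lam < 1 by rewrite ltr_pdivrMr // mul1r.
  have feas : lowLP_feas a b J alpha xhat i (fun j => lam * th J alpha i xhat (Glow i) j).
    split.
      rewrite (eq_bigr (fun j => lam * (vv alpha i xhat j * th J alpha i xhat (Glow i) j))); last first.
        by move=> j _; rewrite /vv; ring.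
      by rewrite -mulr_sumr -P_repr // /lam divfK // gt_eqF.
    move=> j hj; have /andP[t0 t1] := @th01 _ _ _ J alpha i xhat (Glow i) j G0.
    by rewrite mulr_ge0 //= mulr_ile1 // ltW.
  have := hmin _ feas; rewrite -mulr_sumr.
  have [hs _] := @sum_th _ _ _ J alpha i xhat (Glow i) G0.
  have : lam * \sum_(j in J i) th J alpha i xhat (Glow i) j <= lam * Glow i.
    exact: ler_wpM2l.
  move=> h1 h2.
  have GZ : Glow i = 0 by nra.
  by move: p_pos; rewrite /p GZ P0 ltxx.
have theta_from_robust : forall i G, Ihat a b J alpha xhat i -> 0 <= G -> G <= cardJ R J i ->
    P J alpha i G xhat <= s a b xhat i -> G <= Glow i.
  move=> i G hI G0 Gc hP; rewrite leNgt; apply/negP => hlt.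
  have [Gl0 Glc hPG] := Glow_facts i hI.
  have hm := P_mono ha i xhat (Glow i) G Gl0 (ltW hlt).
  have E : s a b xhat i = P J alpha i G xhat.
    by apply/eqP; rewrite eq_le hP -hPG hm.
  have hE := huniq i hI G (introT andP (conj G0 Gc)) E.
  by move: hlt; rewrite hE ltxx.
have robust_from_theta : forall G, Theta a b J alpha xhat Glow G -> forall i,
    P J alpha i (G i) xhat <= s a b xhat i /\ 0 <= G i <= cardJ R J i.
  move=> G hT i; have [h1 h2] := hT i; case: (Ihat_dec i) => hI.
    have /andP[g0 g1] := h1 hI; have [Gl0 Glc hPG] := Glow_facts i hI.
    split; last by rewrite g0 (le_trans g1).
    by rewrite -hPG; apply: P_mono.
  have /andP[g0 g1] := h2 hI; split; last by rewrite g0.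
  apply: le_trans (P_le_sum ha i xhat (G i) g0) _.
  rewrite leNgt; apply/negP => hlt; apply: hI; split => //; exact: ltW.
split.
  move=> G c u y z pi phi lam mu [hOm [hij [hi [hpi hc]]]].
  have hT : Theta a b J alpha xhat Glow G.
    move=> k; have [hrob hz hG hpik hphik] := hi k.
    have /andP[g0 gc] := hG.
    have PG : P J alpha k (G k) xhat <= s a b xhat k.
      apply: le_trans (dual_bound k xhat (G k) (y k) (z k) g0 hz _ _) _.
      - by move=> j hj; have [_ _ _ hy _] := hij k j hj.
      - move=> j hj; have [h1 h2 h3 _ _] := hij k j hj.
        apply: le_trans h3; rewrite /vv.
        have : `|alpha k j * xhat j| <= u k j.
          by rewrite ler_norml; apply/andP; split; lra.
        by rewrite normrM (ger0_norm (ha k j hj)).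
      - by rewrite /s; lra.
    split=> hI //; rewrite g0 /=; exact: theta_from_robust.
  have key : forall k, pi k * t k <= pi k * (\sum_j a k j * xhat j - b k) +
      \sum_(j in J k) alpha k j * (lam k j - mu k j) * xhat j.
    move=> k; have [_ _ hG hpik hphik] := hi k.
    have low : - \sum_(j in J k) vv alpha k xhat j * phi k j <=
               \sum_(j in J k) alpha k j * (lam k j - mu k j) * xhat j.
      rewrite -sumrN; apply: ler_sum => j hj.
      have [_ _ _ _ [hphipi hphieq hphi0 hl0 hm0]] := hij k j hj.
      rewrite hphieq /vv -subr_ge0.
      have -> : alpha k j * (lam k j - mu k j) * xhat j -
          - (alpha k j * `|xhat j| * (lam k j + mu k j)) =
          alpha k j * (lam k j * (`|xhat j| + xhat j) + mu k j * (`|xhat j| - xhat j)).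
        by ring.
      have n1 := ler_norm (xhat j).
      have n2 : - xhat j <= `|xhat j| by rewrite -normrN ler_norm.
      apply: mulr_ge0; first exact: ha.
      by apply: addr_ge0; apply: mulr_ge0 => //; lra.
    case: (boolP (pi k == 0)) => [/eqP p0|pn0].
      rewrite p0 !mul0r add0r; apply: le_trans low.
      rewrite big1 ?oppr0 // => j hj.
      have [_ _ _ _ [hphipi _ hphi0 _ _]] := hij k j hj.
      have -> : phi k j = 0 by apply/eqP; rewrite eq_le hphi0 -p0 hphipi.
      by rewrite mulr0.
    have pp : 0 < pi k by rewrite lt_def pn0 hpik.
    have sf : sub_feas a b J alpha xhat Omega Glow k G (fun j => phi k j / pi k).
      split; [|split; [|split=> //]].
      - rewrite /= -mulr_suml.
        have HH := ler_pdivrMr (G k) (\sum_(i in J k) phi k i) pp.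
        by move: hphik; rewrite -HH; apply.
      - move=> j hj; have [_ _ _ _ [hphipi _ hphi0 _ _]] := hij k j hj.
        have HH := ler_pdivrMr 1 (phi k j) pp; rewrite mul1r in HH.
        apply/andP; split; first by apply: divr_ge0 => //; exact: ltW.
        by move: hphipi; rewrite -HH; apply.
    have hle := hopt k G _ sf; rewrite /sub_obj in hle.
    have piS : pi k * \sum_(j in J k) alpha k j * `|xhat j| * (phi k j / pi k) =
               \sum_(j in J k) vv alpha k xhat j * phi k j.
      rewrite mulr_sumr; apply: eq_bigr => j _; rewrite /vv; field.
      by rewrite pn0.
    apply: le_trans (ler_wpM2l (ltW pp) hle) _.
    rewrite !mulrBr piS; lra.
  have E : dg_obj b xhat c pi = \sum_k (pi k * (\sum_j a k j * xhat j - b k) +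
      \sum_(j in J k) alpha k j * (lam k j - mu k j) * xhat j).
    rewrite /dg_obj (eq_bigr (fun j => \sum_i a i j * pi i * xhat j +
        \sum_(i | j \in J i) alpha i j * (lam i j - mu i j) * xhat j)); last first.
      by move=> j _; rewrite -hc mulrDl !mulr_suml.
    rewrite big_split /= [X in X + _ - _ = _]exchange_big /=.
    rewrite [X in _ + X - _ = _](exchange_big_dep xpredT) //=.
    rewrite -big_split /= -sumrB; apply: eq_bigr => i _.
    have e : \sum_j a i j * pi i * xhat j = pi i * \sum_j a i j * xhat j.
      by rewrite mulr_sumr; apply: eq_bigr => j _; ring.
    rewrite e; ring.
  rewrite E; apply: le_trans (ler_sum _ (fun k _ => key k)).
  have -> : t istar = \sum_k pi k * t istar by rewrite -mulr_suml hpi mul1r.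
  apply: ler_sum => k _; apply: ler_wpM2l; last exact: hstar.
  by have [_ _ _ ->] := hi k.
have [hsG [hsphi [hTG hOG]]] := hsub istar.
set G := Gs istar in hsG hsphi hTG hOG *.
have G0 : forall k, 0 <= G k by move=> k; have [_ /andP[]] := robust_from_theta G hTG k.
set thS := th J alpha istar xhat (G istar).
have thS01 : forall j, 0 <= thS j <= 1 by move=> j; apply: th01.
have sgn_cases : forall j, sgn (xhat j) = 1 \/ sgn (xhat j) = -1.
  by move=> j; rewrite /sgn; case: ifP => _; [left | right].
have PS : P J alpha istar (G istar) xhat = \sum_(j in J istar) vv alpha istar xhat j * thS j.
  exact: P_repr.
have [sthS _] := @sum_th _ _ _ J alpha istar xhat (G istar) (G0 istar).
have tEq : t istar = s a b xhat istar - P J alpha istar (G istar) xhat.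
  apply/eqP; rewrite eq_le; apply/andP; split.
    have sf : sub_feas a b J alpha xhat Omega Glow istar G thS.
      by split; [|split; [move=> j _; apply: thS01 | split]].
    have := hopt istar G thS sf; rewrite /sub_obj PS /s.
    by move=> h; apply: le_trans h _; rewrite /vv; lra.
  rewrite ht /sub_obj /s.
  have := greedy ha istar xhat (G istar) (phis istar) (G0 istar) hsphi hsG.
  by rewrite /vv => h; lra.
split.
  exists (fun k j => vv alpha k xhat j),
    (fun k j => (vv alpha k xhat j - wst J alpha k xhat (G k)) * th J alpha k xhat (G k) j),
    (fun k => wst J alpha k xhat (G k)),
    (fun k j => if k == istar then thS j else 0),
    (fun k j => if k == istar then thS j * ((1 - sgn (xhat j)) / 2) else 0),
    (fun k j => if k == istar then thS j * ((1 + sgn (xhat j)) / 2) else 0).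
  split; last first.
    rewrite /dg_obj tEq.
    have eb : \sum_i b i * unitv R istar i = b istar.
      rewrite (bigD1 istar) //= /unitv eqxx mulr1 big1 ?addr0 // => k /negbTE ->.
      by rewrite mulr0.
    rewrite eb (eq_bigr (fun j => a istar j * xhat j -
       (if j \in J istar then vv alpha istar xhat j * thS j else 0))); last first.
      move=> j _; rewrite abar_th; case: ifP => _; last by rewrite subr0.
      rewrite /vv -(sgnK _ (xhat j)) /thS; ring.
    by rewrite sumrB -big_mkcond /= -PS /s; ring.
  split; first exact: hOG.
  split.
    move=> k j hj; have [d1 [d2 _]] := dual_exact ha k xhat (G k) (G0 k).
    have n1 := ler_norm (xhat j).
    have n2 : - xhat j <= `|xhat j| by rewrite -normrN ler_norm.
    have a0 := ha k j hj.
    split.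
    - rewrite /vv -mulrDr; apply: mulr_ge0 => //; lra.
    - rewrite /vv -mulrN -mulrDr; apply: mulr_ge0 => //; lra.
    - exact: d2.
    - exact: d1.
    - rewrite /unitv; case: eqP => _; last by split; rewrite ?lexx ?addr0.
      have /andP[t0 t1] := thS01 j.
      split => //.
      + by field.
      + by case: (sgn_cases j) => ->; rewrite ?subrr ?mul0r ?mulr0 //; apply: mulr_ge0 => //; lra.
      + by case: (sgn_cases j) => ->; rewrite ?subrr ?mul0r ?mulr0 //; apply: mulr_ge0 => //; lra.
  split.
    move=> k; have [d1 [d2 d3]] := dual_exact ha k xhat (G k) (G0 k).
    have [hPk /andP[g0 gc]] := robust_from_theta G hTG k.
    split.
    - by move: hPk; rewrite -d3 /s => h; lra.
    - exact: wst_ge0.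
    - by rewrite g0 gc.
    - by rewrite /unitv; case: eqP.
    - rewrite /unitv; case: eqP => [->|_]; first by rewrite mulr1.
      by rewrite big1 ?mulr0.
  split.
    rewrite (bigD1 istar) //= /unitv eqxx big1 ?addr0 // => k /negbTE ->.
    by [].
  move=> j; rewrite abar_th.
  have ea : \sum_i a i j * unitv R istar i = a istar j.
    rewrite (bigD1 istar) //= /unitv eqxx mulr1 big1 ?addr0 // => k /negbTE ->.
    by rewrite mulr0.
  rewrite ea; case: ifP => hj.
    rewrite (bigD1 istar) //= eqxx big1 ?addr0; last first.
      by move=> k /andP[_ /negbTE ->]; rewrite subrr mulr0.
    rewrite /thS; field.
  by [].
  rewrite big1 ?addr0 // => k hk; case: eqP => [E|_]; last by rewrite subrr mulr0.
  by rewrite E hj in hk.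
have abar_nz : (forall i, (exists2 j, j \in J i & `|a i j| > alpha i j) \/
              (exists2 j, j \notin J i & a i j != 0)) ->
    forall k G' x', 0 <= G' -> abar a J alpha k G' x' <> (fun _ => 0).
  move=> hcond k G' x' G'0 E.
  have Ej : forall j, abar a J alpha k G' x' j = 0 by move=> j; rewrite E.
  case: (hcond k) => [[j hj hlt] | [j hj hne]].
    have := Ej j; rewrite abar_th hj => /eqP; rewrite subr_eq0 => /eqP ea.
    move: hlt; rewrite ea !normrM normsgn mul1r (ger0_norm (ha k j hj)).
    have /andP[t0 t1] := @th01 _ _ _ J alpha k x' G' j G'0.
    rewrite (ger0_norm t0) => hlt.
    have : alpha k j * th J alpha k x' G' j <= alpha k j by apply: ler_piMr => //; exact: ha.
    by rewrite leNgt hlt.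
  by have := Ej j; rewrite abar_th (negbTE hj) => /eqP; rewrite (negbTE hne).
move=> hcond; split; first exact: abar_nz.
by move=> k G' x' /andP[G'0 _]; apply: abar_nz.
Qed.
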